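(* Let $K=\mathbb{Q}(\gamma)$ be a number field of degree $n\ge2$ and let $f=a_nX^n+\dotsb+a_0\in\mathbb{Z}[X]$ be irreducible with $f(\gamma)=0$. For $0\le j\le n$ put $p_j=a_n\gamma^j+a_{n-1}\gamma^{j-1}+\dotsb+a_{n-j}$ and $q_j=a_j+a_{j-1}\gamma^{-1}+\dotsb+a_0\gamma^{-j}$, and let $M=\mathbb{Z}+\mathbb{Z}\gamma+\dotsb+\mathbb{Z}\gamma^{n-1}$, $D=\mathbb{Z}p_0+\dotsb+\mathbb{Z}p_{n-1}$, $N=\mathbb{Z}q_0+\dotsb+\mathbb{Z}q_{n-1}$. Then $$\mathrm{Bl}(\mathbb{Z}+\mathbb{Z}\gamma)=M:M=\mathbb{Z}[\gamma]\cap\mathbb{Z}[\gamma^{-1}]=\mathbb{Z}+N=\mathbb{Z}+D,$$ and $N$ and $D$ are coprime invertible integral ideals of this ring $A=\mathrm{Bl}(\mathbb{Z}+\mathbb{Z}\gamma)$ (i.e. ideals contained in $A$), with $A/N\cong\mathbb{Z}/a_0\mathbb{Z}$ and $A/D\cong\mathbb{Z}/a_n\mathbb{Z}$ as rings, such that $N:D=\gamma\cdot A$.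
   Context: All colon operations are taken inside $K$: for additive subgroups $I,J\subseteq K$, $I:J=\{x\in K: xJ\subseteq I\}$, $IJ$ is the group of finite sums of products, $I^0=I:I$, $I^{k+1}=I^kI$, and $\mathrm{Bl}(I)=\bigcup_{k\ge0}(I^k:I^k)$. Ideals $N,D$ of a commutative ring $A$ are coprime if $N+D=A$; an ideal $N$ of $A$ is invertible if there is an $A$-submodule $J\subseteq K$ with $NJ=A$. *)

(* Defs.v *)
From HB Require Import structures.
From mathcomp Require Import all_boot all_order all_algebra all_field.
Set Implicit Arguments. Unset Strict Implicit. Unset Printing Implicit Defensive.
Import Order.TTheory GRing.Theory Num.Theory.
Local Open Scope ring_scope.

Section Subgroups.
Variable K : fieldType.

Definition eqg (I J : K -> Prop) : Prop := forall x, I x <-> J x.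
Definition subg (I J : K -> Prop) : Prop := forall x, I x -> J x.

Definition Zspan (m : nat) (v : 'I_m -> K) : K -> Prop :=
  fun x => exists c : 'I_m -> int, x = \sum_(i < m) v i *~ c i.

Definition addg (I J : K -> Prop) : K -> Prop :=
  fun x => exists a b, I a /\ J b /\ x = a + b.

Definition prodg (I J : K -> Prop) : K -> Prop :=
  fun x => exists (m : nat) (a b : 'I_m -> K),
    (forall i, I (a i) /\ J (b i)) /\ x = \sum_(i < m) a i * b i.

Definition colon (I J : K -> Prop) : K -> Prop :=
  fun x => forall y, J y -> I (x * y).

Fixpoint powg (I : K -> Prop) (k : nat) : K -> Prop :=
  match k with
  | 0 => colon I I
  | k'.+1 => prodg (powg I k') I
  end.

Definition Bl (I : K -> Prop) : K -> Prop :=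
  fun x => exists k, colon (powg I k) (powg I k) x.

Definition scaleg (g : K) (A : K -> Prop) : K -> Prop :=
  fun x => exists a, A a /\ x = g * a.

Definition Zadj (g : K) : K -> Prop :=
  fun x => exists p : {poly int}, x = (map_poly (fun z : int => z%:~R) p).[g].

Definition addsubgroup (J : K -> Prop) : Prop :=
  J 0 /\ (forall x y, J x -> J y -> J (x - y)).

Definition Asubmodule (A J : K -> Prop) : Prop :=
  addsubgroup J /\ (forall a x, A a -> J x -> J (a * x)).

Definition integral_ideal (A N : K -> Prop) : Prop :=
  Asubmodule A N /\ subg N A.

Definition invertible_ideal (A N : K -> Prop) : Prop :=
  exists J : K -> Prop, Asubmodule A J /\ eqg (prodg N J) A.

Definition coprime_ideals (A N D : K -> Prop) : Prop := eqg (addg N D) A.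

(* A/N is isomorphic, as a ring, to Z/mZ: expressed (first isomorphism theorem)
   as the existence of a surjective ring homomorphism A -> Z/mZ with kernel N,
   where Z/mZ is represented by integers modulo m. *)
Definition quot_iso_Zmod (A N : K -> Prop) (m : int) : Prop :=
  exists phi : K -> int,
    [/\ (forall x y, A x -> A y -> (phi (x + y) = phi x + phi y %[mod m])%Z),
        (forall x y, A x -> A y -> (phi (x * y) = phi x * phi y %[mod m])%Z),
        (phi (GRing.one K) = 1 %[mod m])%Z,
        (forall z : int, exists x, A x /\ (phi x = z %[mod m])%Z) &
        (forall x, A x -> (N x <-> (m %| phi x)%Z))].

End Subgroups.

Definition irreducible_Z (f : {poly int}) : Prop :=
  [/\ f != 0, f \isn't a GRing.unit &
      forall g h : {poly int}, f = g * h -> g \is a GRing.unit \/ h \is a GRing.unit].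

Definition pj (K : fieldType) (f : {poly int}) (n : nat) (g : K) (j : nat) : K :=
  \sum_(i < j.+1) (f`_(n - i))%:~R * g ^+ (j - i).

Definition qj (K : fieldType) (f : {poly int}) (g : K) (j : nat) : K :=
  \sum_(i < j.+1) (f`_(j - i))%:~R * g ^- i.

(* Main.v *)
Require Import Defs.
From HB Require Import structures.
From mathcomp Require Import all_boot all_order all_algebra all_field.
From mathcomp Require Import ring lra zify.
From Stdlib Require Import ClassicalEpsilon FunctionalExtensionality PropExtensionality.
Import Order.TTheory GRing.Theory Num.Theory.
Local Open Scope ring_scope.
Set Implicit Arguments. Unset Strict Implicit. Unset Printing Implicit Defensive.

Section Basic.
Variable K : fieldType.
Implicit Types (g x y : K) (P Q : {poly int}).

Definition ev P g := (map_poly (fun z : int => z%:~R : K) P).[g].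

Lemma evD P Q g : ev (P + Q) g = ev P g + ev Q g.
Proof. by rewrite /ev rmorphD hornerD. Qed.
Lemma evN P g : ev (- P) g = - ev P g.
Proof. by rewrite /ev rmorphN hornerN. Qed.
Lemma evM P Q g : ev (P * Q) g = ev P g * ev Q g.
Proof. by rewrite /ev rmorphM hornerM. Qed.
Lemma evC (c : int) g : ev c%:P g = c%:~R.
Proof. by rewrite /ev map_polyC hornerC. Qed.
Lemma evX g : ev 'X g = g.
Proof. by rewrite /ev map_polyX hornerX. Qed.
Lemma evZ (c : int) P g : ev (c *: P) g = c%:~R * ev P g.
Proof. by rewrite -mul_polyC evM evC. Qed.
Lemma evXn k g : ev 'X^k g = g ^+ k.
Proof. by rewrite /ev map_polyXn hornerXn. Qed.

Lemma ev_wide P g m : (size P <= m)%N -> ev P g = \sum_(i < m) (P`_i)%:~R * g ^+ i.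
Proof.
move=> hs; rewrite /ev (@horner_coef_wide _ m); last first.
  apply: leq_trans hs; rewrite map_polyE; apply: leq_trans (size_Poly _) _; by rewrite size_map.
by apply: eq_bigr => i _; rewrite coef_map_id0 // mulr0z.
Qed.

Lemma Zadj_ev P g : Zadj g (ev P g).
Proof. by exists P. Qed.
Lemma Zadj_add g x y : Zadj g x -> Zadj g y -> Zadj g (x + y).
Proof. by move=> [P ->] [Q ->]; exists (P + Q); rewrite /ev rmorphD hornerD. Qed.
Lemma Zadj_opp g x : Zadj g x -> Zadj g (- x).
Proof. by move=> [P ->]; exists (- P); rewrite /ev rmorphN hornerN. Qed.
Lemma Zadj_sub g x y : Zadj g x -> Zadj g y -> Zadj g (x - y).
Proof. by move=> hx hy; apply: Zadj_add => //; apply: Zadj_opp. Qed.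
Lemma Zadj_mul g x y : Zadj g x -> Zadj g y -> Zadj g (x * y).
Proof. by move=> [P ->] [Q ->]; exists (P * Q); rewrite /ev rmorphM hornerM. Qed.
Lemma Zadj_int g (c : int) : Zadj g c%:~R.
Proof. by exists c%:P; rewrite map_polyC hornerC. Qed.
Lemma Zadj_gen g : Zadj g g.
Proof. by exists 'X; rewrite map_polyX hornerX. Qed.
Lemma Zadj_pow g k : Zadj g (g ^+ k).
Proof. by exists 'X^k; rewrite map_polyXn hornerXn. Qed.

End Basic.

Section Spans.
Variable K : fieldType.

Definition zgroup (S : K -> Prop) := S 0 /\ (forall x y, S x -> S y -> S (x - y)).

Lemma zg_opp S x : zgroup S -> S x -> S (- x).
Proof. by move=> [h0 hB] hx; rewrite -sub0r; apply: hB. Qed.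
Lemma zg_add S x y : zgroup S -> S x -> S y -> S (x + y).
Proof. by move=> hS hx hy; rewrite -[y]opprK; apply: hS.2 => //; apply: zg_opp. Qed.
Lemma zg_muln S x k : zgroup S -> S x -> S (x *+ k).
Proof.
move=> hS hx; elim: k => [|k IH]; first by rewrite mulr0n; exact: hS.1.
by rewrite mulrS; apply: zg_add.
Qed.
Lemma zg_mulz S x (c : int) : zgroup S -> S x -> S (x *~ c).
Proof.
move=> hS hx; case: c => k; first exact: zg_muln.
by rewrite NegzE mulrNz; apply: zg_opp => //; apply: zg_muln.
Qed.
Lemma zg_int S (c : int) : zgroup S -> S 1 -> S (c%:~R).
Proof. exact: zg_mulz. Qed.
Lemma zg_zmul S (c : int) x : zgroup S -> S x -> S (c%:~R * x).
Proof. by move=> hS hx; rewrite mulrzl; exact: zg_mulz. Qed.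
Lemma zg_sum S m (F : 'I_m -> K) : zgroup S -> (forall i, S (F i)) -> S (\sum_(i < m) F i).
Proof.
move=> hS hF; apply: (big_ind S) => //; first exact: hS.1.
by move=> x y; apply: zg_add.
Qed.

Lemma Zspan_zg m (v : 'I_m -> K) : zgroup (Zspan v).
Proof.
split; first by exists (fun _ => 0); rewrite big1 // => i _; rewrite mulr0z.
move=> x y [c ->] [d ->]; exists (fun i => c i - d i).
by rewrite -sumrB; apply: eq_bigr => i _; rewrite mulrzBr.
Qed.

Lemma Zspan_gen m (v : 'I_m -> K) i : Zspan v (v i).
Proof.
exists (fun j => (j == i)%:Z); rewrite (bigD1 i) //= eqxx mulr1z big1 ?addr0 //.
by move=> j /negbTE ->; rewrite mulr0z.
Qed.

Lemma Zspan_min m (v : 'I_m -> K) (S : K -> Prop) :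
  zgroup S -> (forall i, S (v i)) -> forall x, Zspan v x -> S x.
Proof.
move=> hS hv x [c ->]; apply: zg_sum => // i; exact: zg_mulz.
Qed.

Lemma Zadj_zg g : zgroup (Zadj g).
Proof. by split; [rewrite -[0](mulr0z 1); apply: Zadj_int | apply: Zadj_sub]. Qed.

Lemma rev_ev (g : K) (T : {poly int}) m : g != 0 -> (size T <= m.+1)%N ->
  ev T g * g ^- m = ev (\poly_(i < m.+1) T`_(m - i)) g^-1.
Proof.
move=> g0 hs; rewrite (ev_wide _ hs) (ev_wide _ (size_poly _ _)) mulr_suml.
rewrite [RHS](reindex_inj rev_ord_inj) /=; apply: eq_bigr => i _; rewrite subSS.
have hi := ltn_ord i.
rewrite coef_poly /= ifT; last by lia.
have -> : (m - (m - i))%N = i by lia.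
rewrite -mulrA; congr (_ * _).
have gu : g \is a GRing.unit by rewrite unitfE.
rewrite exprVn (exprB _ gu); last by lia.
by rewrite invf_div.
Qed.

End Spans.

Section Evs.
Variable K : fieldType.

Lemma ev_split (P : {poly int}) (g : K) : ev P g = (P`_0)%:~R + ev (drop_poly 1 P) g * g.
Proof.
have e := poly_take_drop 1 P.
have e2 : take_poly 1 P = (P`_0)%:P.
  apply/polyP=> i; rewrite coef_take_poly coefC; by case: i.
by rewrite -{1}e e2 evD evC evM expr1 evX.
Qed.

Lemma ev_sum m (F : 'I_m -> {poly int}) (g : K) : ev (\sum_(i < m) F i) g = \sum_(i < m) ev (F i) g.
Proof. by rewrite /ev rmorph_sum horner_sum. Qed.

End Evs.

Section Quot.
Variable K : fieldType.

Lemma quot_gen (A T : K -> Prop) (m : int) :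
  zgroup A -> (forall x y, A x -> A y -> A (x * y)) ->
  zgroup T -> (forall a x, A a -> T x -> T (a * x)) -> (forall c : int, A c%:~R) ->
  (forall x, A x -> exists c : int, T (x - c%:~R)) ->
  T m%:~R -> (forall c : int, T c%:~R -> (m %| c)%Z) ->
  quot_iso_Zmod A T m.
Proof.
move=> hA hAM hT hAT hAi hdec hm hdiv.
pose phi x := epsilon (inhabits (0 : int)) (fun c : int => T (x - c%:~R)).
have hphi x : A x -> T (x - (phi x)%:~R).
  by move=> /hdec hx; apply: (epsilon_spec (inhabits (0:int)) (fun c : int => T (x - c%:~R))).
have key x (c : int) : A x -> T (x - c%:~R) -> (phi x = c %[mod m])%Z.
  move=> ax hc; apply/eqP; rewrite eqz_mod_dvd; apply: hdiv; rewrite intrB.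
  have -> : (phi x)%:~R - c%:~R = (x - c%:~R) - (x - (phi x)%:~R) :> K by ring.
  by apply: hT.2 => //; apply: hphi.
exists phi; split.
- move=> x y ax ay; apply: key; first exact: zg_add.
  have -> : x + y - (phi x + phi y)%:~R = (x - (phi x)%:~R) + (y - (phi y)%:~R) :> K.
    by rewrite intrD; ring.
  by apply: zg_add => //; apply: hphi.
- move=> x y ax ay; apply: key; first exact: hAM.
  have -> : x * y - (phi x * phi y)%:~R = y * (x - (phi x)%:~R) + (phi x)%:~R * (y - (phi y)%:~R) :> K.
    by rewrite intrM; ring.
  by apply: zg_add => //; apply: hAT => //; apply: hphi.
- apply: key; first by have := hAi 1; rewrite mulr1z.
  by rewrite mulr1z subrr; exact: hT.1.
- move=> z; exists z%:~R; split => //; apply: key => //.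
  by rewrite subrr; exact: hT.1.
- move=> x ax; split.
    move=> tx; apply: hdiv.
    have -> : (phi x)%:~R = x - (x - (phi x)%:~R) :> K by ring.
    by apply: hT.2 => //; apply: hphi.
  move=> /dvdzP [q hq].
  have -> : x = (x - (phi x)%:~R) + q%:~R * m%:~R.
    by rewrite -intrM -hq; ring.
  by apply: zg_add => //; [apply: hphi | apply: hAT].
Qed.
End Quot.

Section Main.
Variable K : fieldExtType rat.
Variable gamma : K.
Variable n : nat.
Variable f : {poly int}.
Hypothesis hfull : <<1%VS; gamma>>%VS = fullv.
Hypothesis hdim : \dim {:K} = n.
Hypothesis hn2 : (2 <= n)%N.
Hypothesis hsize : size f = n.+1.
Hypothesis hirr : irreducible_Z f.
Hypothesis hroot : (map_poly (fun z : int => z%:~R) f).[gamma] = 0.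

Local Notation eg P := (ev P gamma).
Local Notation a i := ((f`_i)%:~R : K).
Definition r k := eg (drop_poly k f).

Lemma hf0 : eg f = 0.
Proof. exact: hroot. Qed.

Lemma adj_deg : adjoin_degree 1%VS gamma = n.
Proof.
have := dim_Fadjoin (1%VS : {vspace K}) gamma; rewrite hfull dimv1 muln1 => <-.
by rewrite -hdim.
Qed.

Lemma gamma_neq0 : gamma != 0.
Proof.
apply/eqP=> g0; move: adj_deg; rewrite g0.
have := dim_Fadjoin (1%VS : {vspace K}) 0; rewrite Fadjoin0 dimv1 muln1 => <- n1.
by move: hn2; rewrite -n1.
Qed.

Lemma intrK_eq0 (c : int) : ((c%:~R : K) == 0) = (c == 0).
Proof.
have -> : (c%:~R : K) = in_alg K (c%:~R : rat) by rewrite rmorph_int.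
by rewrite fmorph_eq0 intr_eq0.
Qed.

Lemma r_rec k : gamma * r k.+1 = r k - a k.
Proof.
rewrite /r; have -> : drop_poly k f = (f`_k)%:P + drop_poly k.+1 f * 'X.
  apply/polyP=> i; rewrite coefD coefMX coefC !coef_drop_poly.
  by case: i => [|i] //=; rewrite ?add0r ?addr0 // addSnnS.
rewrite evD evM evC evX; ring.
Qed.

Lemma r0 : r 0 = 0.
Proof. by rewrite /r drop_poly0l hf0. Qed.

Lemma r_big k : (n < k)%N -> r k = 0.
Proof. by move=> hk; rewrite /r drop_poly_eq0 ?hsize // /ev map_poly0 horner0. Qed.

Lemma r_n : r n = a n.
Proof.
rewrite /r; have -> : drop_poly n f = (f`_n)%:P.
  apply/polyP=> i; rewrite coefC coef_drop_poly.
  case: i => [|i] //=; rewrite nth_default // hsize; lia.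
by rewrite evC.
Qed.

Lemma pj_r j : (j <= n)%N -> pj f n gamma j = r (n - j).
Proof.
move=> hj; rewrite /r (@ev_wide _ _ _ j.+1); last first.
  by rewrite size_drop_poly hsize; lia.
rewrite /pj (reindex_inj rev_ord_inj) /=; apply: eq_bigr => i _.
have hi := ltn_ord i.
rewrite coef_drop_poly; congr (_ * _); last by congr (_ ^+ _); rewrite /=; lia.
congr ((f`_ _)%:~R); rewrite /=; lia.
Qed.

Lemma ev_take_drop k : eg (take_poly k f) + r k * gamma ^+ k = 0.
Proof.
by rewrite /r -evXn -evM -evD poly_take_drop hf0.
Qed.

Lemma qj_r j : (j < n)%N -> qj f gamma j = - (gamma * r j.+1).
Proof.
move=> hj.
have gu : gamma \is a GRing.unit by rewrite unitfE gamma_neq0.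
have e1 : gamma ^+ j * qj f gamma j = eg (take_poly j.+1 f).
  rewrite (@ev_wide _ _ _ j.+1); last first.
    exact: size_take_poly.
  rewrite /qj mulr_sumr (reindex_inj rev_ord_inj) /=; apply: eq_bigr => i _.
  rewrite coef_take_poly ltn_ord mulrCA -exprB ?gu //; last first.
    by have := ltn_ord i; lia.
  congr ((f`_ _)%:~R * _ ^+ _); have := ltn_ord i; lia.
have e2 := ev_take_drop j.+1.
apply: (mulfI (expf_neq0 j gamma_neq0)); rewrite e1.
have -> : eg (take_poly j.+1 f) = - (r j.+1 * gamma ^+ j.+1).
  by apply/eqP; rewrite -addr_eq0; apply/eqP.
rewrite exprS; ring.
Qed.



Lemma mapKE (P : {poly int}) :
  map_poly (fun z : int => z%:~R : K) P =
  map_poly (in_alg K) (map_poly (intr : int -> rat) P).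
Proof. by rewrite -map_poly_comp; apply: eq_map_poly => z; exact: (esym (rmorph_int (in_alg K) z)). Qed.

Lemma intrK_inj : injective (fun z : int => z%:~R : K).
Proof.
move=> x y /= /eqP; rewrite -subr_eq0 -intrB intrK_eq0 subr_eq0.
by move/eqP.
Qed.

Lemma cont_unit : zcontents f = 1 \/ zcontents f = -1.
Proof.
case: hirr => _ _ /(_ (zcontents f)%:P (zprimitive f)).
rewrite mul_polyC -zpolyEprim => /(_ erefl) [].
  rewrite poly_unitE size_polyC coefC /= => /andP [_ hu].
  by move: hu => /orP [/eqP -> | /eqP ->]; [left|right].
rewrite poly_unitE size_zprimitive hsize => /andP [/eqP hn _].
by move: hn2 hn; lia.
Qed.

Lemma zprim_f : exists c : int, zprimitive f = c *: f.
Proof.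
have := zpolyEprim f; set z := zprimitive f => e.
case: cont_unit => hc; rewrite hc in e; [exists 1 | exists (-1)];
  by rewrite e scalerA ?mulrNN mulr1 scale1r.
Qed.

Lemma gauss (H : {poly int}) : eg H = 0 -> exists G, H = f * G.
Proof.
move=> hH.
set mp := minPoly (1%VS : {vspace K}) gamma.
have pO : forall P : {poly int}, map_poly (fun z : int => z%:~R : K) P \is a polyOver 1%VS.
  by move=> P; apply/polyOver1P; exists (map_poly intr P); rewrite mapKE.
have d1 : mp %| map_poly (fun z : int => z%:~R : K) H.
  by apply: minPoly_dvdp; rewrite ?pO // /root; apply/eqP.
have d2 : mp %| map_poly (fun z : int => z%:~R : K) f.
  by apply: minPoly_dvdp; rewrite ?pO // /root; apply/eqP; exact: hroot.
have s1 : size mp = n.+1 by rewrite size_minPoly adj_deg.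
have s2 : size (map_poly (fun z : int => z%:~R : K) f) = n.+1.
  rewrite size_map_inj_poly ?hsize //; exact: intrK_inj.
have e : mp %= map_poly (fun z : int => z%:~R : K) f.
  by rewrite -dvdp_size_eqp // s1 s2.
have d3 : map_poly (fun z : int => z%:~R : K) f %| map_poly (fun z : int => z%:~R : K) H.
  by rewrite -(eqp_dvdl _ e).
move: d3; rewrite !mapKE dvdp_map dvdp_rat_int => /dvdpP_int [G hG].
case: zprim_f => c hc; exists (c *: G); by rewrite hG hc -scalerAl scalerAr.
Qed.

Definition Zg := Zadj gamma.
Definition Zi := Zadj gamma^-1.
Definition Ac x := Zg x /\ Zi x.
Definition Dc x := Zg x /\ Zi (gamma * x).
Definition Dset := Zspan (fun i : 'I_n => pj f n gamma i).
Definition Nset := Zspan (fun i : 'I_n => qj f gamma i).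

Lemma D_zg : zgroup Dset.
Proof. exact: Zspan_zg. Qed.

Lemma Zi_powV k : Zi (gamma ^- k).
Proof. by rewrite -exprVn; apply: Zadj_pow. Qed.

Lemma qj_Zi j : Zi (qj f gamma j).
Proof.
apply: zg_sum; first exact: Zadj_zg.
move=> i; apply: Zadj_mul; [exact: Zadj_int | exact: Zi_powV].
Qed.

Lemma rk_D k : Dset (r k).
Proof.
case: (ltnP n k) => hk; first by rewrite r_big //; exact: D_zg.1.
case: k hk => [|k] hk; first by rewrite r0; exact: D_zg.1.
have hi : (n - k.+1 < n)%N by lia.
have -> : r k.+1 = pj f n gamma (Ordinal hi).
  by rewrite pj_r /=; [congr r; lia | lia].
exact: Zspan_gen.
Qed.

Lemma drop_fG_D : forall G k, Dset (eg (drop_poly k (f * G))).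
Proof.
elim/poly_ind => [|G c IH] k.
  by rewrite mulr0 drop_poly0r /ev map_poly0 horner0; exact: D_zg.1.
have -> : f * (G * 'X + c%:P) = (f * G) * 'X^1 + c *: f.
  by rewrite mulrDr mulrA -mul_polyC expr1 [_ * f]mulrC.
rewrite drop_polyD drop_polyZ evD evZ.
apply: zg_add; [exact: D_zg | | by apply: zg_zmul; [exact: D_zg | exact: rk_D]].
case: k => [|k].
  rewrite drop_poly0l evM evXn /ev.
  have -> : (map_poly (fun z : int => z%:~R : K) (f * G)).[gamma] = 0.
    by rewrite rmorphM hornerM hroot mul0r.
  by rewrite mul0r; exact: D_zg.1.
by rewrite drop_polyMXn subSS subn0 expr0 mulr1 /=; apply: IH.
Qed.

Lemma Dc_zg : zgroup Dc.
Proof.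
split; first by split; [exact: (Zadj_zg _).1 | rewrite mulr0; exact: (Zadj_zg _).1].
move=> x y [hx1 hx2] [hy1 hy2]; split; first exact: Zadj_sub.
by rewrite mulrBr; apply: Zadj_sub.
Qed.

Lemma D_Dc x : Dset x -> Dc x.
Proof.
apply: Zspan_min; first exact: Dc_zg.
move=> i; have hi := ltn_ord i.
rewrite pj_r; last by lia.
split; first exact: Zadj_ev.
have := qj_r (_ : (n - 1 - i < n)%N); rewrite (_ : (n - 1 - i).+1 = n - i)%N; last by lia.
move=> /(_ ltac:(lia)) e.
have -> : gamma * r (n - i) = - qj f gamma (n - 1 - i) by rewrite e opprK.
apply: zg_opp; [exact: Zadj_zg | exact: qj_Zi].
Qed.

Lemma Dc_D x : Dc x -> Dset x.
Proof.
move=> [[P ->] [Q hQ]].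
set m := size Q.
have g0 := gamma_neq0.
have gi0 : gamma^-1 != 0 by rewrite invr_eq0.
have := rev_ev gi0 (leqnSn m); rewrite invrK {1}/ev -hQ exprVn invrK.
set Q' := \poly_(_ < _) _ => hQ'.
have hs : (size (- Q') <= m.+1)%N by rewrite size_opp; exact: size_poly.
have hH : eg (- Q' + P * 'X^(m.+1)) = 0.
  rewrite evD evN evM evXn -hQ' -/(ev P gamma) exprS; ring.
have [G hG] := gauss hH.
have := drop_fG_D G m.+1; rewrite -hG drop_polyDMXn //.
Qed.

Lemma D_iff x : Dset x <-> Dc x.
Proof. by split; [apply: D_Dc | apply: Dc_D]. Qed.

Lemma N_iff x : Nset x <-> Dset (gamma^-1 * x).
Proof.
have g0 := gamma_neq0.
split.
  apply: (@Zspan_min _ _ _ (fun y => Dset (gamma^-1 * y))).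
    split; first by rewrite mulr0; exact: D_zg.1.
    by move=> y z hy hz; rewrite mulrBr; apply: D_zg.2.
  move=> i; have hi := ltn_ord i.
  rewrite qj_r // mulrN mulrA mulVf // mul1r.
  apply: zg_opp; first exact: D_zg.
  exact: rk_D.
move=> h; rewrite -[x](mulVKf g0).
move: h; apply: (@Zspan_min _ _ _ (fun y => Nset (gamma * y))).
  split; first by rewrite mulr0; exact: (Zspan_zg _).1.
  by move=> y z hy hz; rewrite mulrBr; apply: (Zspan_zg _).2.
move=> i; have hi := ltn_ord i.
rewrite pj_r; last by lia.
have hj : (n - 1 - i < n)%N by lia.
have := qj_r hj; rewrite (_ : (n - 1 - i).+1 = n - i)%N; last by lia.
move=> e; have -> : gamma * r (n - i) = - qj f gamma (n - 1 - i) by rewrite e opprK.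
apply: zg_opp; first exact: Zspan_zg.
exact: (Zspan_gen (fun i : 'I_n => qj f gamma i) (Ordinal hj)).
Qed.

Definition Lspan m x := exists P : {poly int}, (size P <= m)%N /\ x = eg P.

Lemma Lspan_zg m : zgroup (Lspan m).
Proof.
split; first by exists 0; rewrite size_poly0 /ev map_poly0 horner0.
move=> x y [P [hP ->]] [Q [hQ ->]]; exists (P - Q); split; last by rewrite evD evN.
by apply: leq_trans (size_add _ _) _; rewrite size_opp geq_max hP hQ.
Qed.

Lemma Lspan_mon m i (c : int) : (i < m)%N -> Lspan m (c%:~R * gamma ^+ i).
Proof.
move=> hi; exists (c *: 'X^i); split; last by rewrite evZ evXn.
by apply: leq_trans (size_scale_leq _ _) _; rewrite size_polyXn.
Qed.

Definition I2 := Zspan (fun i : 'I_2 => gamma ^+ i).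

Lemma Lspan_pow m i : (i < m)%N -> Lspan m (gamma ^+ i).
Proof. by move=> hi; rewrite -[_ ^+ _]mul1r -[1](mulr1z); apply: Lspan_mon. Qed.

Lemma I2_pow i : (i < 2)%N -> I2 (gamma ^+ i).
Proof. move=> hi; exact: (Zspan_gen (fun i : 'I_2 => gamma ^+ i) (Ordinal hi)). Qed.

Lemma Zspan_pow m x : Zspan (fun i : 'I_m => gamma ^+ i) x <-> Lspan m x.
Proof.
split.
  apply: Zspan_min; first exact: Lspan_zg.
  move=> i; rewrite -[_ ^+ _]mul1r -[1](mulr1z); apply: Lspan_mon; exact: ltn_ord.
move=> [P [hP ->]]; rewrite (ev_wide _ hP); exists (fun i => P`_i).
by apply: eq_bigr => i _; rewrite mulrzl.
Qed.

Lemma Lspan_mul m1 m2 x y : Lspan m1.+1 x -> Lspan m2.+1 y -> Lspan (m1 + m2).+1 (x * y).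
Proof.
move=> [P [hP ->]] [Q [hQ ->]]; exists (P * Q); split; last by rewrite evM.
apply: leq_trans (size_mul_leq _ _) _; lia.
Qed.


Lemma prodg_sub (A B C : K -> Prop) : zgroup C -> (forall a b, A a -> B b -> C (a * b)) ->
  forall x, prodg A B x -> C x.
Proof.
move=> hC hAB x [m [u [v [huv ->]]]]; apply: zg_sum => // i.
by case: (huv i) => ha hb; apply: hAB.
Qed.

Lemma sum2 (F : 'I_2 -> K) : \sum_(i < 2) F i = F ord0 + F (lift ord0 ord0).
Proof. by rewrite !big_ord_recl big_ord0 addr0. Qed.

Lemma powg_L k : forall x, powg I2 k.+1 x <-> Lspan k.+2 x.
Proof.
elim: k => [|k IH] x.
  split.
    apply: prodg_sub; first exact: Lspan_zg.
    by move=> a b ha /ha /Zspan_pow.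
  move=> /Zspan_pow hx; exists 1%N, (fun _ => 1), (fun _ => x); split.
    by move=> i; split => //; move=> y hy; rewrite mul1r.
  by rewrite big_ord1 mul1r.
split.
  apply: prodg_sub; first exact: Lspan_zg.
  move=> a b /IH ha /Zspan_pow hb; have := Lspan_mul ha hb.
  by rewrite addn1.
move=> [P [hP ->]].
have e := poly_take_drop k.+2 P.
pose c := (drop_poly k.+2 P)`_0.
have hd : drop_poly k.+2 P = c%:P.
  apply/polyP=> i; rewrite coefC; case: i => [|i] //=.
  rewrite coef_drop_poly nth_default //. apply: leq_trans hP _; lia.
exists 2%N, (fun i : 'I_2 => if val i == 0%N then eg (take_poly k.+2 P) else c%:~R * gamma ^+ k.+1),
  (fun i : 'I_2 => if val i == 0%N then 1 else gamma); split.
  case=> [[|[|i]] hi] //=; split.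
  - apply/IH; exists (take_poly k.+2 P); split => //; exact: size_take_poly.
  - by rewrite -(expr0 gamma); apply: I2_pow.
  - by apply/IH; apply: Lspan_mon.
  - by rewrite -(expr1 gamma); apply: I2_pow.
rewrite sum2 /= -{1}e evD evM hd evC evXn mulr1 exprS; ring.
Qed.

Definition ZZ := Zspan (fun _ : 'I_1 => (1 : K)).

Lemma ZZ_iff a : ZZ a <-> exists c : int, a = c%:~R.
Proof.
split; first by move=> [c ->]; exists (c ord0); rewrite big_ord1.
by move=> [c ->]; exists (fun _ => c); rewrite big_ord1.
Qed.

Lemma Zg_int (c : int) : Zg c%:~R. Proof. exact: Zadj_int. Qed.
Lemma Zi_int (c : int) : Zi c%:~R. Proof. exact: Zadj_int. Qed.

Lemma Dc_Ac x : Dc x -> Ac x.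
Proof.
move=> [h1 h2]; split => //.
rewrite -[x](mulKf gamma_neq0); apply: Zadj_mul => //.
exact: Zadj_gen.
Qed.

Lemma Nc_iff x : Nset x <-> Zg (gamma^-1 * x) /\ Zi x.
Proof.
have e : gamma * (gamma^-1 * x) = x by rewrite mulVKf ?gamma_neq0.
split.
  by move=> /N_iff /D_iff [h1 h2]; rewrite e in h2.
by move=> [h1 h2]; apply/N_iff/D_iff; split => //; rewrite e.
Qed.

Lemma N_Ac x : Nset x -> Ac x.
Proof.
move=> /Nc_iff [h1 h2]; split => //.
rewrite -[x](mulVKf gamma_neq0); apply: Zadj_mul => //; exact: Zadj_gen.
Qed.

Lemma Ac_zg : zgroup Ac.
Proof.
split; first by split; exact: (Zadj_zg _).1.
by move=> x y [? ?] [? ?]; split; apply: Zadj_sub.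
Qed.

Lemma Ac_mul x y : Ac x -> Ac y -> Ac (x * y).
Proof. by move=> [? ?] [? ?]; split; apply: Zadj_mul. Qed.

Lemma Ac_int (c : int) : Ac c%:~R.
Proof. by split; apply: Zadj_int. Qed.

Lemma Ac_ZD x : Ac x <-> addg ZZ Dset x.
Proof.
split.
  move=> [hg [Q hQ]]; exists ((Q`_0)%:~R), (x - (Q`_0)%:~R); split.
    by apply/ZZ_iff; exists Q`_0.
  split; last by rewrite addrC subrK.
  apply/D_iff; split; first by apply: Zadj_sub => //; exact: Zadj_int.
  rewrite hQ -/(ev Q _) ev_split addrC addKr mulrCA mulfV ?invr_eq0 ?gamma_neq0 // mulr1.
  exact: Zadj_ev.
move=> [a [b [/ZZ_iff [c ->] [/D_iff/Dc_Ac hb ->]]]].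
apply: zg_add => //; [exact: Ac_zg | exact: Ac_int].
Qed.

Lemma Ac_ZN x : Ac x <-> addg ZZ Nset x.
Proof.
split.
  move=> [[P hP] hi]; exists ((P`_0)%:~R), (x - (P`_0)%:~R); split.
    by apply/ZZ_iff; exists P`_0.
  split; last by rewrite addrC subrK.
  apply/Nc_iff; split; last by apply: Zadj_sub => //; exact: Zadj_int.
  rewrite hP -/(ev P _) ev_split addrC addKr mulrC mulfK ?gamma_neq0 //.
  exact: Zadj_ev.
move=> [a [b [/ZZ_iff [c ->] [/N_Ac hb ->]]]].
apply: zg_add => //; [exact: Ac_zg | exact: Ac_int].
Qed.

Lemma colon_L_Ac m x : colon (Lspan m.+1) (Lspan m.+1) x -> Ac x.
Proof.
move=> h; split.
  have := h _ (Lspan_pow (ltn0Sn m)); rewrite expr0 mulr1.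
  by move=> [P [_ ->]]; exact: Zadj_ev.
have := h _ (Lspan_pow (ltnSn m)) => -[T [hT e]].
have := rev_ev gamma_neq0 hT; rewrite -e mulrK ?unitfE ?expf_neq0 ?gamma_neq0 // => ->.
exact: Zadj_ev.
Qed.

Lemma Bl_Ac x : Bl I2 x -> Ac x.
Proof.
move=> [[|k] hk].
  have h1 : colon I2 I2 1 by move=> y hy; rewrite mul1r.
  have := hk 1 h1; rewrite mulr1 => hx.
  apply: (@colon_L_Ac 1%N) => y /Zspan_pow hy; apply/Zspan_pow; exact: hx.
apply: (@colon_L_Ac k.+1) => y /powg_L hy; apply/powg_L; exact: hk.
Qed.

Definition Mset := Zspan (fun i : 'I_n => gamma ^+ i).

Lemma M_Bl x : colon Mset Mset x -> Bl I2 x.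
Proof.
move=> h; exists (n - 1)%N.
have -> : (n - 1 = (n - 2).+1)%N by lia.
move=> y /powg_L hy; apply/powg_L.
have e : (n - 2).+2 = n by lia.
rewrite e in hy *; apply/Zspan_pow; apply: h; exact/Zspan_pow.
Qed.

Lemma rk_L i : (i < n)%N -> forall k, Lspan n (r k * gamma ^+ i).
Proof.
elim: i => [|i IH] hi k.
  rewrite expr0 mulr1; case: k => [|k]; first by rewrite r0; exact: (Lspan_zg _).1.
  exists (drop_poly k.+1 f); split => //; rewrite size_drop_poly hsize; lia.
case: k => [|k]; first by rewrite r0 mul0r; exact: (Lspan_zg _).1.
rewrite exprS mulrA [r _ * _]mulrC r_rec mulrBl.
apply: (Lspan_zg _).2; first by apply: IH; lia.
apply: Lspan_mon; lia.
Qed.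

Lemma Ac_M x : Ac x -> colon Mset Mset x.
Proof.
move=> /Ac_ZD [a [b [/ZZ_iff [c ->] [hb ->]]]] y /Zspan_pow [P [hP ->]].
apply/Zspan_pow; rewrite (ev_wide _ hP) mulr_sumr; apply: zg_sum; first exact: Lspan_zg.
move=> i; rewrite mulrCA; apply: zg_zmul; first exact: Lspan_zg.
rewrite mulrDl; apply: zg_add; first exact: Lspan_zg.
  apply: Lspan_mon; exact: ltn_ord.
move: b hb; apply: Zspan_min.
  split; first by rewrite mul0r; exact: (Lspan_zg _).1.
  by move=> u v hu hv; rewrite mulrBl; apply: (Lspan_zg _).2.
move=> j; rewrite pj_r; last by have := ltn_ord j; lia.
apply: rk_L; exact: ltn_ord.
Qed.

Lemma N_zg : zgroup Nset.
Proof. exact: Zspan_zg. Qed.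

Lemma D_Amod a x : Ac a -> Dset x -> Dset (a * x).
Proof.
move=> [ha1 ha2] /D_iff [h1 h2]; apply/D_iff; split; first exact: Zadj_mul.
by rewrite mulrCA; apply: Zadj_mul.
Qed.

Lemma N_Amod a x : Ac a -> Nset x -> Nset (a * x).
Proof.
move=> [ha1 ha2] /Nc_iff [h1 h2]; apply/Nc_iff; split; last exact: Zadj_mul.
by rewrite mulrCA; apply: Zadj_mul.
Qed.

Lemma N_of_D x : Dset x -> Nset (gamma * x).
Proof. by move=> h; apply/N_iff; rewrite mulKf ?gamma_neq0. Qed.

Lemma D_of_N x : Nset x -> Dset (gamma^-1 * x).
Proof. by move/N_iff. Qed.

Definition ND := addg Nset Dset.

Lemma ND_zg : zgroup ND.
Proof.
split; first by exists 0, 0; split; [exact: N_zg.1 | split; [exact: D_zg.1 | rewrite addr0]].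
move=> x y [a [b [ha [hb ->]]]] [c [d [hc [hd ->]]]].
exists (a - c), (b - d); split; first exact: N_zg.2.
split; first exact: D_zg.2.
ring.
Qed.

Lemma ak_ND k : ND (a k).
Proof.
exists (- (gamma * r k.+1)), (r k); split.
  by apply: zg_opp; [exact: N_zg | apply: N_of_D; exact: rk_D].
split; first exact: rk_D.
by rewrite r_rec; ring.
Qed.

Lemma one_ND : ND 1.
Proof.
have hG : ND (((\big[gcdn/0%N]_(i < size f) absz (f`_i)%R)%N : int)%:~R).
  apply: (big_ind (fun d : nat => ND ((d : int)%:~R))).
  - exact: ND_zg.1.
  - move=> u v hu hv; have [c [d e]] := Bezoutz u v.
    have -> : ((gcdn u v : nat) : int) = gcdz u v by [].
    rewrite -e intrD !intrM; apply: zg_add; first exact: ND_zg.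
      by apply: zg_zmul => //; exact: ND_zg.
    by apply: zg_zmul => //; exact: ND_zg.
  - move=> i _; rewrite abszE.
    have [h|h] := lerP 0 (f`_i).
      by rewrite ger0_norm //; exact: ak_ND.
    by rewrite ltr0_norm // intrN; apply: zg_opp; [exact: ND_zg | exact: ak_ND].
have hc : ND ((zcontents f)%:~R).
  by rewrite /zcontents intrM; apply: zg_zmul => //; exact: ND_zg.
case: cont_unit => e; rewrite e in hc; first by rewrite -[1](mulr1z).
by rewrite -[1]opprK; apply: zg_opp; [exact: ND_zg | rewrite -(mulrN1z 1)].
Qed.

Lemma ND_Ac x : ND x <-> Ac x.
Proof.
split.
  move=> [u [v [hu [hv ->]]]]; apply: zg_add; [exact: Ac_zg | exact: N_Ac | ].
  by apply: Dc_Ac; apply/D_iff.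
move=> /Ac_ZD [u [v [/ZZ_iff [c ->] [hv ->]]]].
apply: zg_add; first exact: ND_zg.
  by rewrite -[c%:~R]mulr1; apply: zg_zmul; [exact: ND_zg | exact: one_ND].
by exists 0, v; split; [exact: N_zg.1 | split => //; rewrite add0r].
Qed.

Lemma D_Ac x : Dset x -> Ac x.
Proof. by move/D_iff/Dc_Ac. Qed.

Lemma sum2' (F : 'I_2 -> K) : \sum_(i < 2) F i = F ord0 + F (lift ord0 ord0).
Proof. by rewrite !big_ord_recl big_ord0 addr0. Qed.

Lemma D_inv : invertible_ideal Ac Dset.
Proof.
exists (addg Ac (scaleg gamma Ac)); split.
  split.
    split; first by exists 0, 0; split; [exact: Ac_zg.1 | split; [exists 0; split; [exact: Ac_zg.1 | rewrite mulr0] | rewrite addr0]].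
    move=> x y [u [v [hu [[v' [hv' ->]] ->]]]] [u' [w [hu' [[w' [hw' ->]] ->]]]].
    exists (u - u'), (gamma * (v' - w')); split; first exact: Ac_zg.2.
    split; first by exists (v' - w'); split => //; exact: Ac_zg.2.
    ring.
  move=> b x hb [u [v [hu [[v' [hv' ->]] ->]]]].
  exists (b * u), (gamma * (b * v')); split; first exact: Ac_mul.
  split; first by exists (b * v'); split => //; exact: Ac_mul.
  ring.
move=> x; split.
  apply: prodg_sub; first exact: Ac_zg.
  move=> d y hd [u [v [hu [[v' [hv' ->]] ->]]]].
  rewrite mulrDr; apply: zg_add; first exact: Ac_zg.
    by apply: Ac_mul => //; exact: D_Ac.
  rewrite mulrA [d * gamma]mulrC; apply: Ac_mul => //; apply: N_Ac; exact: N_of_D.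
move=> /ND_Ac [u [v [hu [hv ->]]]].
exists 2%N, (fun i : 'I_2 => if val i == 0%N then v else gamma^-1 * u),
  (fun i : 'I_2 => if val i == 0%N then 1 else gamma); split.
  case=> [[|[|i]] hi] //=; split => //.
  - by exists 1, 0; split; [exact: Ac_int 1 | split; [exists 0; split; [exact: Ac_zg.1 | rewrite mulr0] | rewrite addr0]].
  - exact: D_of_N.
  - by exists 0, gamma; split; [exact: Ac_zg.1 | split; [exists 1; split; [exact: Ac_int 1 | rewrite mulr1] | rewrite add0r]].
by rewrite sum2' /= mulr1 mulrAC mulVf ?gamma_neq0 // mul1r addrC.
Qed.

Lemma N_inv : invertible_ideal Ac Nset.
Proof.
exists (addg Ac (scaleg gamma^-1 Ac)); split.
  split.
    split; first by exists 0, 0; split; [exact: Ac_zg.1 | split; [exists 0; split; [exact: Ac_zg.1 | rewrite mulr0] | rewrite addr0]].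
    move=> x y [u [v [hu [[v' [hv' ->]] ->]]]] [u' [w [hu' [[w' [hw' ->]] ->]]]].
    exists (u - u'), (gamma^-1 * (v' - w')); split; first exact: Ac_zg.2.
    split; first by exists (v' - w'); split => //; exact: Ac_zg.2.
    ring.
  move=> b x hb [u [v [hu [[v' [hv' ->]] ->]]]].
  exists (b * u), (gamma^-1 * (b * v')); split; first exact: Ac_mul.
  split; first by exists (b * v'); split => //; exact: Ac_mul.
  ring.
move=> x; split.
  apply: prodg_sub; first exact: Ac_zg.
  move=> d y hd [u [v [hu [[v' [hv' ->]] ->]]]].
  rewrite mulrDr; apply: zg_add; first exact: Ac_zg.
    by apply: Ac_mul => //; exact: N_Ac.
  rewrite mulrA [d * _]mulrC; apply: Ac_mul => //; apply: D_Ac; exact: D_of_N.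
move=> /ND_Ac [u [v [hu [hv ->]]]].
exists 2%N, (fun i : 'I_2 => if val i == 0%N then u else gamma * v),
  (fun i : 'I_2 => if val i == 0%N then 1 else gamma^-1); split.
  case=> [[|[|i]] hi] //=; split => //.
  - by exists 1, 0; split; [exact: Ac_int 1 | split; [exists 0; split; [exact: Ac_zg.1 | rewrite mulr0] | rewrite addr0]].
  - exact: N_of_D.
  - by exists 0, gamma^-1; split; [exact: Ac_zg.1 | split; [exists 1; split; [exact: Ac_int 1 | rewrite mulr1] | rewrite add0r]].
by rewrite sum2' /= mulr1 mulrAC mulfV ?gamma_neq0 // mul1r.
Qed.

Lemma N_ideal : integral_ideal Ac Nset.
Proof.
split; last exact: N_Ac.
split; first exact: N_zg.
by move=> a x ha hx; apply: N_Amod.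
Qed.

Lemma D_ideal : integral_ideal Ac Dset.
Proof.
split; last exact: D_Ac.
split; first exact: D_zg.
by move=> a x ha hx; apply: D_Amod.
Qed.

Lemma q0_N : Nset (f`_0)%:~R.
Proof.
have h0 : (0 < n)%N by lia.
have := Zspan_gen (fun i : 'I_n => qj f gamma i) (Ordinal h0).
by rewrite /qj /= big_ord1 subn0 expr0 invr1 mulr1.
Qed.

Lemma N_int_dvd (c : int) : Nset c%:~R -> (f`_0 %| c)%Z.
Proof.
move=> /Nc_iff [[P hP] _].
have hH : eg ('X * P - c%:P) = 0.
  rewrite evD evN evM evX evC -[ev P gamma]/((map_poly _ P).[gamma]) -hP.
  by rewrite mulVKf ?gamma_neq0 // subrr.
have [G hG] := gauss hH.
have := congr1 (fun p : {poly int} => p`_0) hG; rewrite /= coefB coefXM coefC /= coef0M.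
rewrite sub0r => e; apply/dvdzP; exists (- G`_0).
by rewrite -[c]opprK e mulrC mulNr.
Qed.

Lemma D_int_dvd (c : int) : Dset c%:~R -> (f`_n %| c)%Z.
Proof.
have [->|c0] := eqVneq c 0; first by rewrite dvdz0.
move=> /D_iff [_ [Q hQ]].
set m := size Q.
have gi0 : gamma^-1 != 0 by rewrite invr_eq0 gamma_neq0.
have := rev_ev gi0 (leqnSn m); rewrite invrK {1}/ev -hQ exprVn invrK.
set Q' := \poly_(_ < _) _ => hQ'.
have hs : (size (- Q') < size (c *: 'X^(m.+1)))%N.
  by rewrite size_opp size_scale // size_polyXn ltnS; exact: size_poly.
have hH : eg (- Q' + c *: 'X^(m.+1)) = 0.
  rewrite evD evN evZ evXn -hQ' exprS; ring.
have [G hG] := gauss hH.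
have := congr1 lead_coef hG; rewrite lead_coefDr // lead_coefZ lead_coefXn mulr1.
rewrite lead_coefM => ->; apply/dvdzP; exists (lead_coef G).
by rewrite mulrC [lead_coef f]lead_coefE hsize.
Qed.

Lemma colon_ND x : colon Nset Dset x <-> scaleg gamma Ac x.
Proof.
have g0 := gamma_neq0.
split.
  move=> h; exists (gamma^-1 * x); split; last by rewrite mulVKf.
  have [u [v [hu [hv e]]]] := one_ND.
  rewrite -[gamma^-1 * x]mulr1 e mulrDr; apply: zg_add; first exact: Ac_zg.
    have -> : gamma^-1 * x * u = x * (gamma^-1 * u) by ring.
    by apply: N_Ac; apply: h; apply: D_of_N.
  rewrite -mulrA; apply: D_Ac; apply: D_of_N; exact: h.
move=> [a [ha ->]] y hy; rewrite -mulrA; apply: N_of_D; exact: D_Amod.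
Qed.

Lemma Bl_eq : Bl I2 = Ac.
Proof.
apply: functional_extensionality => x; apply: propositional_extensionality.
split; first exact: Bl_Ac.
by move=> /Ac_M /M_Bl.
Qed.

Lemma dec_of (T : K -> Prop) : (forall x, Ac x <-> addg ZZ T x) ->
  forall x, Ac x -> exists c : int, T (x - c%:~R).
Proof.
move=> h x /h [u [v [/ZZ_iff [c ->] [hv ->]]]]; exists c.
by rewrite addrC addKr.
Qed.

Lemma main_sec :
  ((eqg (Bl I2) (colon Mset Mset) /\
    eqg (Bl I2) (fun x => Zadj gamma x /\ Zadj gamma^-1 x) /\
    eqg (Bl I2) (addg ZZ Nset) /\
    eqg (Bl I2) (addg ZZ Dset)) /\
   (integral_ideal (Bl I2) Nset /\ integral_ideal (Bl I2) Dset /\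
    invertible_ideal (Bl I2) Nset /\ invertible_ideal (Bl I2) Dset /\
    coprime_ideals (Bl I2) Nset Dset /\
    quot_iso_Zmod (Bl I2) Nset f`_0 /\ quot_iso_Zmod (Bl I2) Dset f`_n /\
    eqg (colon Nset Dset) (scaleg gamma (Bl I2)))).
Proof.
rewrite Bl_eq; split.
  split; first by move=> x; split; [exact: Ac_M | by move=> /M_Bl /Bl_Ac].
  split; first by move=> x; split.
  split; move=> x; [exact: Ac_ZN | exact: Ac_ZD].
split; first exact: N_ideal.
split; first exact: D_ideal.
split; first exact: N_inv.
split; first exact: D_inv.
split; first by move=> x; apply: ND_Ac.
split.
  apply: quot_gen; [exact: Ac_zg | exact: Ac_mul | exact: N_zg | exact: N_Amod
    | exact: Ac_int | exact: dec_of Ac_ZN | exact: q0_N | exact: N_int_dvd].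
split.
  apply: quot_gen; [exact: Ac_zg | exact: Ac_mul | exact: D_zg | exact: D_Amod
    | exact: Ac_int | exact: dec_of Ac_ZD | rewrite -r_n; exact: rk_D | exact: D_int_dvd].
exact: colon_ND.
Qed.

End Main.

Theorem theorem4p59 (K : fieldExtType rat) (gamma : K) (n : nat) (f : {poly int}) :
  <<1%VS; gamma>>%VS = fullv ->
  \dim {:K} = n ->
  (2 <= n)%N ->
  size f = n.+1 ->
  irreducible_Z f ->
  (map_poly (fun z : int => z%:~R) f).[gamma] = 0 ->
  let M := Zspan (fun i : 'I_n => gamma ^+ i) in
  let D := Zspan (fun i : 'I_n => pj f n gamma i) in
  let N := Zspan (fun i : 'I_n => qj f gamma i) in
  let Z := Zspan (fun _ : 'I_1 => (1 : K)) in
  let A := Bl (Zspan (fun i : 'I_2 => gamma ^+ i)) in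
  ((eqg A (colon M M) /\
    eqg A (fun x => Zadj gamma x /\ Zadj gamma^-1 x) /\
    eqg A (addg Z N) /\
    eqg A (addg Z D)) /\
   (integral_ideal A N /\ integral_ideal A D /\
    invertible_ideal A N /\ invertible_ideal A D /\
    coprime_ideals A N D /\
    quot_iso_Zmod A N f`_0 /\ quot_iso_Zmod A D f`_n /\
    eqg (colon N D) (scaleg gamma A))).
Proof.
move=> h1 h2 h3 h4 h5 h6 M D N Z A.
exact: (main_sec h1 h2 h3 h4 h5 h6).
Qed.
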